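(* For all $n\geq 3$, the center of $\mathcal{BR}(\mathfrak{S}_n)$ equals the submonoid $\{(1,J)\mid J \text{ boxed}\}$ generated by $e_1,\dots,e_{n-1}$, which is isomorphic to the monoid $\mathcal{C}_n$ of compositions of $n$.
   Context: $\mathfrak{C}_n$ is the partition monoid: set partitions of $[2n]$ (top points $1,\dots,n$, bottom points $n+1,\dots,2n$) with concatenation product. $I\preceq J$ means each block of $J$ is a union of blocks of $I$. $\mathfrak{S}_n\subseteq\mathfrak{C}_n$ consists of the partitions with all blocks of the form $\{i,n+j\}$; $1=\{\{i,n+i\}\}$. A set partition $J$ of $[2n]$ is boxed if $1\preceq J$ and the restriction of $J$ to $[n]$ has all blocks intervals. $\mathcal{BR}(\mathfrak{S}_n)$ is the set of pairs $(I,J)$ with $I\in\mathfrak{S}_n$, $J$ boxed, $I\preceq J$, with componentwise concatenation product. $e_i=(1,b_i)$, where $b_i$ merges the blocks $\{i,n+i\}$ and $\{i+1,n+i+1\}$ of $1$. $\mathcal{C}_n$ is the set of compositions of $n$ with positive parts, with product the finest common coarsening (join), where $\mu$ is finer than $\mu'$ if $\mu'$ is obtained by adding consecutive parts of $\mu$; boxed partitions correspond to compositions via the sizes of their blocks halved. *)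

(* Defs.v *)
From mathcomp Require Import all_boot.
Set Implicit Arguments. Unset Strict Implicit. Unset Printing Implicit Defensive.

(* Points of [2n]: top point i (paper: i+1) is [inl i], bottom point i
   (paper: n+i+1) is [inr i], for i : 'I_n (0-based). *)
Definition pt (n : nat) : finType := ('I_n + 'I_n)%type.

Definition part (n : nat) := {set {set pt n}}.

Definition is_setpart n (P : part n) : bool := partition P [set: pt n].

Definition pidx n (x : pt n) : 'I_n := match x with inl i => i | inr i => i end.

(* Concatenation: P on top, Q below; the bottom row of P is glued to the top
   row of Q.  Points of the three-layer diagram are (i, layer). *)
Definition layer n : finType := ('I_n * 'I_3)%type.
Definition l0 : 'I_3 := @Ordinal 3 0 isT.
Definition l1 : 'I_3 := @Ordinal 3 1 isT.
Definition l2 : 'I_3 := @Ordinal 3 2 isT.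
Definition emb_up n (x : pt n) : layer n :=
  match x with inl i => (i, l0) | inr i => (i, l1) end.
Definition emb_down n (x : pt n) : layer n :=
  match x with inl i => (i, l1) | inr i => (i, l2) end.
Definition emb_out n (x : pt n) : layer n :=
  match x with inl i => (i, l0) | inr i => (i, l2) end.

Definition glue_rel n (P Q : part n) : rel (layer n) := fun u v =>
  [exists B in P, exists a in B, exists b in B,
      (emb_up a == u) && (emb_up b == v)] ||
  [exists B in Q, exists a in B, exists b in B,
      (emb_down a == u) && (emb_down b == v)].

Definition pmul n (P Q : part n) : part n :=
  [set [set y | connect (glue_rel P Q) (emb_out x) (emb_out y)] | x : pt n].

Definition pfiner n (I J : part n) : Prop :=
  forall B, B \in J -> B = \bigcup_(A in I | A \subset B) A.

Definition pone n : part n := [set [set inl i; inr i] | i : 'I_n].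

Definition in_Sn n (P : part n) : Prop :=
  is_setpart P /\ forall B, B \in P -> exists i j : 'I_n, B = [set inl i; inr j].

Definition boxed n (J : part n) : Prop :=
  [/\ is_setpart J, pfiner (pone n) J &
      forall B, B \in J -> forall i j k : 'I_n, i <= j <= k ->
        inl i \in B -> inl k \in B -> inl j \in B].

Definition BR n (x : part n * part n) : Prop :=
  [/\ in_Sn x.1, boxed x.2 & pfiner x.1 x.2].

Definition brmul n (x y : part n * part n) : part n * part n :=
  (pmul x.1 y.1, pmul x.2 y.2).

Definition brone n : part n * part n := (pone n, pone n).

(* b_i (paper index 1 <= i <= n-1) merges the blocks {i, n+i} and
   {i+1, n+i+1} of 1; with 0-based indices these are the indices i-1 and i. *)
Definition bgen n (i : nat) : part n :=
  [set [set inl j; inr j] | j : 'I_n & (val j != i.-1) && (val j != i)] :|: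
  [set [set x : pt n | (val (pidx x) == i.-1) || (val (pidx x) == i)]].

Definition egen n (i : nat) : part n * part n := (pone n, bgen n i).

Definition composition (n : nat) (mu : seq nat) : Prop :=
  all (fun k => 0 < k) mu /\ sumn mu = n.

(* mu' is obtained from mu by adding consecutive parts. *)
Definition coarser (mu mu' : seq nat) : Prop :=
  exists r : seq nat, [/\ all (fun k => 0 < k) r, sumn r = size mu &
                           mu' = [seq sumn s | s <- reshape r mu]].

Definition is_join (mu nu rho : seq nat) : Prop :=
  [/\ coarser mu rho, coarser nu rho &
      forall tau, coarser mu tau -> coarser nu tau -> coarser rho tau].

(* Main.v *)
Require Import Defs.
From mathcomp Require Import all_boot zify fingroup perm.
Set Implicit Arguments. Unset Strict Implicit. Unset Printing Implicit Defensive.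

Section Gen.
Variable n : nat.
Implicit Types (R : rel (pt n)) (P : part n).

Definition cls R : part n := [set [set y | R x y] | x : pt n].

Definition eqv R := forall x y z, R x x /\ (R x y -> R x z = R y z).

Lemma eqv_sym R : eqv R -> forall x y, R x y = R y x.
Proof.
move=> H x y; apply/idP/idP => h.
  by have [hx /(_ h) <-] := H x y x.
by have [hy /(_ h) <-] := H y x y.
Qed.

Lemma cls_ext R R' : R =2 R' -> cls R = cls R'.
Proof.
by move=> h; rewrite /cls; apply: eq_imset => x; apply/setP => y; rewrite !inE h.
Qed.

Lemma pblock_cls R x : eqv R -> pblock (cls R) x = [set y | R x y].
Proof.
move=> H; rewrite /pblock; case: pickP => [A /andP[/imsetP[z _ ->]]|].
  rewrite inE => Rzx; apply/setP => y; rewrite !inE.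
  by have [_ ->] := H z x y.
move/(_ [set y | R x y]) => /=; rewrite inE; case: (H x x x) => -> _; rewrite andbT; move/negP; case; apply/imsetP; exists x.
by [].
by [].

Qed.

Lemma cls_part R : eqv R -> is_setpart (cls R).
Proof.
move=> H; rewrite /is_setpart /cls.
have -> : [set [set y | R x y] | x : pt n] =
          equivalence_partition R [set: pt n].
  apply/setP => B; apply/imsetP/imsetP => -[x _ ->]; exists x => //; apply/setP => y; by rewrite !inE.
apply: equivalence_partitionP => x y z _ _ _.
have [h1 _] := H z x y; have [_ h2] := H x y z; by split.
Qed.

Lemma cls_inj R R' : eqv R -> eqv R' -> cls R = cls R' -> R =2 R'.
Proof.
move=> H H' E x y.
by have := congr1 (fun P => y \in pblock P x) E; rewrite /= !pblock_cls // !inE.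
Qed.

Lemma part_cls P : is_setpart P -> P = cls (fun x y => y \in pblock P x).
Proof.
move=> hP; rewrite -{1}(equivalence_partition_pblock hP).
by apply/setP => B; apply/imsetP/imsetP => -[x _ ->]; exists x => //; apply/setP => y; rewrite !inE.
Qed.

Lemma eqv_pblock P : is_setpart P -> eqv (fun x y => y \in pblock P x).
Proof.
move=> hP x y z; have [h1 _] := pblock_equivalence hP (in_setT x) (in_setT x) (in_setT x).
have [_ h2] := pblock_equivalence hP (in_setT x) (in_setT y) (in_setT z); by split.
Qed.

Definition ck (T : eqType) (p : pt n -> T) := cls (fun x y => p x == p y).

Lemma eqv_key (T : eqType) (p : pt n -> T) : eqv (fun x y => p x == p y).
Proof. by move=> x y z; split => // /eqP ->. Qed.

Lemma connect_key (T : finType) (e : rel T) (U : eqType) (K : T -> U) u v :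
  (forall a b, e a b -> K a = K b) -> connect e u v -> K u = K v.
Proof.
move=> hK /connectP [p pp ->]; elim: p u pp => //= w p IH u /andP [euw pw].
by rewrite (hK _ _ euw) (IH _ pw).
Qed.

End Gen.

Fixpoint lab (f : nat -> bool) (i : nat) : nat :=
  if i is i'.+1 then lab f i' + ~~ f i' else 0.

Lemma lab_le f i j : i <= j -> lab f i <= lab f j.
Proof.
elim: j => [|j IH]; first by rewrite leqn0 => /eqP ->.
rewrite leq_eqVlt => /orP [/eqP -> //| ]; rewrite ltnS => /IH /=; lia.
Qed.

Lemma lab_eqP f i j : i <= j ->
  (lab f i = lab f j) <-> (forall k, i <= k < j -> f k).
Proof.
elim: j => [|j IH]; first by rewrite leqn0 => /eqP ->; split => // _ k; lia.
rewrite leq_eqVlt => /orP [/eqP -> | ]; first by split => // _ k; lia.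
rewrite ltnS => hij /=; have hle := lab_le f hij.
split.
  case hf: (f j) => /= E; last by lia.
  have /IH h : lab f i = lab f j by lia.
  move=> k /andP [h1 h2]; have [->//|hk] := eqVneq k j.
  by apply: (h hij); lia.
move=> H; have hfj : f j by apply: H; lia.
rewrite hfj addn0; apply/IH => // k hk; apply: H; lia.
Qed.

Lemma lab_eq_sym f i j :
  (lab f i = lab f j) <-> (forall k, minn i j <= k < maxn i j -> f k).
Proof.
case: (leqP i j) => hij.

  exact: lab_eqP.

split => [E|H]; first by apply/(lab_eqP f (ltnW hij)).
by apply/esym/(lab_eqP f (ltnW hij)).
Qed.

Lemma lab_or f g i j : lab f i = lab f j ->
  lab (fun k => f k || g k) i = lab (fun k => f k || g k) j.
Proof.
move/lab_eq_sym => H; apply/lab_eq_sym => k hk; by rewrite H.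
Qed.

Lemma lab_ext f g m i : (forall k, k < m -> f k = g k) -> i <= m -> lab f i = lab g i.
Proof.
move=> H; elim: i => //= i IH hi; rewrite IH ?H //; lia.
Qed.

Section Glue.
Variable n : nat.

Lemma glue_up (T : eqType) (p : pt n -> T) (Q : part n) a b :
  p a = p b -> glue_rel (ck p) Q (emb_up a) (emb_up b).
Proof.
move=> E; apply/orP; left; apply/existsP; exists [set y | p a == p y].
rewrite (imset_f (fun x => [set y | p x == p y])) //=.
apply/existsP; exists a; rewrite inE eqxx /=; apply/existsP; exists b.
by rewrite inE E !eqxx.
Qed.

Lemma glue_down (T : eqType) (q : pt n -> T) (P : part n) a b :
  q a = q b -> glue_rel P (ck q) (emb_down a) (emb_down b).
Proof.
move=> E; apply/orP; right; apply/existsP; exists [set y | q a == q y].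
rewrite (imset_f (fun x => [set y | q x == q y])) //=.
apply/existsP; exists a; rewrite inE eqxx /=; apply/existsP; exists b.
by rewrite inE E !eqxx.
Qed.

Lemma glue_inv (T U : eqType) (p : pt n -> T) (q : pt n -> U) u v :
  glue_rel (ck p) (ck q) u v ->
  (exists a b, [/\ p a = p b, u = emb_up a & v = emb_up b]) \/
  (exists a b, [/\ q a = q b, u = emb_down a & v = emb_down b]).
Proof.
case/orP => /existsP [B /andP [/imsetP [x _ ->] /existsP [a /andP [ha /existsP [b /andP [hb /andP [/eqP hu /eqP hv]]]]]]].
  left; exists a, b; split => //.
  by move: ha hb; rewrite !inE => /eqP <- /eqP <-.
right; exists a, b; split => //.
by move: ha hb; rewrite !inE => /eqP <- /eqP <-.
Qed.

Lemma glue_sym (P Q : part n) : symmetric (glue_rel P Q).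
Proof.
suff H : forall u v, glue_rel P Q u v -> glue_rel P Q v u.
  by move=> u v; apply/idP/idP => /H.
move=> u v /orP [] /existsP [B /andP [hB /existsP [a /andP [ha /existsP [b /andP [hb /andP [hu hv]]]]]]];
  apply/orP; [left|right]; apply/existsP; exists B; rewrite hB /=;
  apply/existsP; exists b; rewrite hb /=; apply/existsP; exists a; by rewrite ha hu hv.
Qed.

Lemma glue_csym (P Q : part n) u v : connect (glue_rel P Q) u v = connect (glue_rel P Q) v u.
Proof. by apply: sym_connect_sym; apply: glue_sym. Qed.

Definition kf (g : 'I_n -> 'I_n) (x : pt n) : 'I_n :=
  match x with inl i => g i | inr j => j end.
Definition pf g := ck (kf g).

Definition Klay (g h : 'I_n -> 'I_n) (u : layer n) : 'I_n :=
  match val u.2 with 0 => h (g u.1) | 1 => h u.1 | _ => u.1 end.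

Lemma pmul_pf g h : pmul (pf g) (pf h) = pf (fun i => h (g i)).
Proof.
rewrite /pmul /pf /ck; apply: cls_ext => x y.
have hup : forall a, Klay g h (emb_up a) = h (kf g a) by case.
have hdn : forall a, Klay g h (emb_down a) = kf h a by case.
have hout : forall a, Klay g h (emb_out a) = kf (fun i => h (g i)) a by case.
apply/idP/idP.
  move/(connect_key (K := Klay g h)); rewrite !hout => -> //.
  move=> u v /glue_inv [] [a [b [E -> ->]]]; by rewrite ?hup ?hdn E.
have H : forall u, connect (glue_rel (ck (kf g)) (ck (kf h))) u (Klay g h u, l2).
  case=> i [[|[|[|m]]] Hm] //.
  - have -> : Ordinal Hm = l0 by apply: val_inj.
    apply: (connect_trans (y := (g i, l1))).
      apply: connect1; exact: (@glue_up _ (kf g) _ (inl i) (inr (g i))).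
    apply: connect1; exact: (@glue_down _ (kf h) _ (inl (g i)) (inr (h (g i)))).
  - have -> : Ordinal Hm = l1 by apply: val_inj.
    apply: connect1; exact: (@glue_down _ (kf h) _ (inl i) (inr (h i))).
  - have -> : Ordinal Hm = l2 by apply: val_inj.
    exact: connect0.
move/eqP => E; apply: (connect_trans (H _)); rewrite hout E -hout glue_csym.
exact: H.
Qed.

End Glue.

Section Box.
Variable n : nat.

Definition Jb (f : nat -> bool) : part n := ck (fun x : pt n => lab f (pidx x)).

Lemma pmul_Jb f g : pmul (Jb f) (Jb g) = Jb (fun k => f k || g k).
Proof.
set fg := (fun k => f k || g k).
rewrite /pmul /Jb /ck; apply: cls_ext => x y.
set e := glue_rel _ _.
have hv1 : forall i : 'I_n, connect e (i, l0) (i, l1).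
  move=> i; apply: connect1; exact: (@glue_up n _ (fun x : pt n => lab f (pidx x)) _ (inl i) (inr i)).
have hv2 : forall i : 'I_n, connect e (i, l1) (i, l2).
  move=> i; apply: connect1; exact: (@glue_down n _ (fun x : pt n => lab g (pidx x)) _ (inl i) (inr i)).
have hv : forall (i : 'I_n) l, connect e (i, l) (i, l0).
  move=> i [[|[|[|m]]] Hm] //.
  - have -> : Ordinal Hm = l0 by apply: val_inj. exact: connect0.
  - have -> : Ordinal Hm = l1 by apply: val_inj. by rewrite glue_csym.
  - have -> : Ordinal Hm = l2 by apply: val_inj. rewrite glue_csym.
    exact: connect_trans (hv1 i) (hv2 i).
have hstep : forall k k' : 'I_n, nat_of_ord k' = (nat_of_ord k).+1 -> fg k ->
    connect e (k, l0) (k', l0).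
  move=> k k' hk /orP [hf|hg].
    apply: connect1; apply: (@glue_up n _ (fun x : pt n => lab f (pidx x)) _ (inl k) (inl k')).
    rewrite /= hk; apply/(lab_eqP _ (leqnSn k)) => j hj; have -> : j = k by lia. done.
  apply: (connect_trans (hv1 k)); apply: (connect_trans (y := (k', l1))).
    apply: connect1; apply: (@glue_down n _ (fun x : pt n => lab g (pidx x)) _ (inl k) (inl k')).
    rewrite /= hk; apply/(lab_eqP _ (leqnSn k)) => j hj; have -> : j = k by lia. done.
  by rewrite glue_csym.
have hz : forall d (i j : 'I_n), nat_of_ord j = nat_of_ord i + d ->
    (forall k, i <= k < j -> fg k) -> connect e (i, l0) (j, l0).
  elim=> [|d IH] i j hij H.
    by have -> : j = i by apply: ord_inj; rewrite hij addn0.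
  have hd : nat_of_ord i + d < n by rewrite (leq_trans _ (ltn_ord j)) // hij addnS.
  apply: (connect_trans (IH i (Ordinal hd) erefl _)).
    move=> k /= hk; apply: H. lia.
  apply: hstep; first by rewrite /= hij addnS.
  apply: H => /=; lia.
have hout : forall a : pt n, emb_out a = (pidx a, if a is inl _ then l0 else l2).
  by case.
apply/idP/idP.
  move/(connect_key (K := fun u : layer n => lab fg u.1)); rewrite !hout /= => -> //.
  move=> u v /glue_inv [] [a [b [E -> ->]]].
    by have := lab_or g E; case: a {E}; case: b.
  have := lab_or f E.
  have sw : forall i, lab (fun k => g k || f k) i = lab fg i.
    by move=> i; apply: (@lab_ext _ _ i) => // k _; rewrite /fg orbC.
  by rewrite !sw; case: a {E}; case: b.
move/eqP => E.
suff : connect e (pidx x, l0) (pidx y, l0).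
  move=> h; rewrite !hout; apply: connect_trans (hv _ _) _.
  by apply: connect_trans h _; rewrite glue_csym.
wlog hxy : x y E / pidx x <= pidx y.
  move=> W; case: (leqP (pidx x) (pidx y)) => h; first exact: W.
  by rewrite glue_csym; apply: W => //; exact: ltnW.
apply: (hz (pidx y - pidx x)); first by lia.
by apply/lab_eqP.
Qed.

End Box.

Section S.
Variable n : nat.

Lemma eq_inl (a b : 'I_n) : (inl a == inl b :> pt n) = (a == b). Proof. by []. Qed.
Lemma eq_inr (a b : 'I_n) : (inr a == inr b :> pt n) = (a == b). Proof. by []. Qed.
Lemma eq_lr (a b : 'I_n) : (inl a == inr b :> pt n) = false. Proof. by []. Qed.
Lemma eq_rl (a b : 'I_n) : (inr a == inl b :> pt n) = false. Proof. by []. Qed.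
Definition eqsimp := (eq_inl, eq_inr, eq_lr, eq_rl).

Lemma pone_ck : pone n = ck (@pidx n).
Proof.
have E : forall x : pt n, [set y | pidx x == pidx y] = [set inl (pidx x); inr (pidx x)].
  move=> x; apply/setP => y; case: y => j; rewrite !inE !eqsimp ?orbF //= eq_sym.
apply/setP => B; apply/imsetP/imsetP => -[x _ ->].
  by exists (inl x) => //; rewrite E.
by exists (pidx x) => //; rewrite E.
Qed.

Lemma pone_pf : pone n = pf (fun i => i).
Proof. by rewrite pone_ck /pf /ck; apply: cls_ext => x y; case: x; case: y. Qed.

Lemma lab_false i : lab (fun _ => false) i = i.
Proof. by elim: i => //= i ->; rewrite addn1. Qed.

Lemma lab_true i : lab (fun _ => true) i = 0.
Proof. by elim: i => //= i ->. Qed.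

Lemma pone_Jb : pone n = Jb n (fun _ => false).
Proof. by rewrite pone_ck /Jb /ck; apply: cls_ext => x y; rewrite !lab_false. Qed.

Lemma pf_inj (g h : 'I_n -> 'I_n) : pf g = pf h -> g =1 h.
Proof.
move=> E i; have := cls_inj (eqv_key _) (eqv_key _) E (inl i) (inr (g i)).
by rewrite /= eqxx => /esym/eqP.
Qed.

Lemma pf_ext (g h : 'I_n -> 'I_n) : g =1 h -> pf g = pf h.
Proof. by move=> E; apply: cls_ext => x y; case: x; case: y => * /=; rewrite ?E. Qed.

Lemma setpart_cover (P : part n) x : is_setpart P -> x \in cover P.
Proof. by case/and3P => /eqP -> _ _; rewrite inE. Qed.

Lemma insn_pf (P : part n) : in_Sn P -> exists g, P = pf g.
Proof.
case=> hP hB.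
have tiP : trivIset P by case/and3P: hP.
have cov := fun x => setpart_cover x hP.
have mem x : x \in pblock P x by rewrite mem_pblock cov.
have Bx x : exists i j, pblock P x = [set inl i; inr j].
  by apply: hB; apply: pblock_mem.
have /fin_all_exists [g hg] : forall i : 'I_n, exists j, pblock P (inl i) = [set inl i; inr j].
  move=> i; have [a [b E]] := Bx (inl i); exists b.
  by have := mem (inl i); rewrite E !inE !eqsimp orbF => /eqP ->.
have same x y : y \in pblock P x -> pblock P y = pblock P x by apply: same_pblock.
have ginj : injective g.
  move=> i i' E.
  have h1 : inr (g i) \in pblock P (inl i) by rewrite hg !inE eqxx orbT.
  have h2 : inr (g i) \in pblock P (inl i') by rewrite hg E !inE eqxx orbT.
  have := mem (inl i'); rewrite -(same _ _ h2) (same _ _ h1) hg !inE !eqsimp orbF.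
  by move/eqP.
exists g; rewrite (part_cls hP) /pf /ck; apply: cls_ext => x y.
case: x => [i|j].
  rewrite hg !inE; case: y => [i'|j'] /=; rewrite !eqsimp ?orbF.
    by rewrite (inj_eq ginj) eq_sym.
  by rewrite eq_sym.
have [a [b E]] := Bx (inr j).
have hb : b = j by have := mem (inr j); rewrite E !inE !eqsimp /= => /eqP.
subst b.
have ga : g a = j.
  have h1 : inl a \in pblock P (inr j) by rewrite E !inE eqxx.
  by have := hg a; rewrite (same _ _ h1) E => /setP /(_ (inr j)); rewrite !inE !eqsimp eqxx /= => /esym/eqP.
rewrite E !inE; case: y => [i'|j'] /=; rewrite !eqsimp ?orbF //.
by rewrite -ga (inj_eq ginj) eq_sym.
Qed.

Lemma insn_perm (s : {perm 'I_n}) : in_Sn (pf (fun i => s i)).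
Proof.
split; first exact: cls_part (eqv_key _).
move=> B /imsetP [x _ ->]; exists ((s^-1)%g (kf (fun i => s i) x)), (kf (fun i => s i) x).
apply/setP => y; rewrite !inE; case: y => [i|j] /=; rewrite !eqsimp ?orbF //.
rewrite eq_sym; apply/eqP/eqP => [<-|->]; by rewrite ?permK ?permKV.
Qed.

Lemma pfiner_full (P : part n) : is_setpart P -> pfiner P (Jb n (fun _ => true)).
Proof.
move=> hP B /imsetP [x _ ->].
have -> : [set y | lab (fun _ => true) (pidx x) == lab (fun _ => true) (pidx y)] = [set: pt n].
  by apply/setP => y; rewrite !inE !lab_true.
have := hP; case/and3P => /eqP hc _ _.
rewrite -{1}hc /cover; apply: eq_bigl => A; by rewrite subsetT andbT.
Qed.

Lemma boxed_Jb f : boxed (Jb n f).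
Proof.
split; first exact: cls_part (eqv_key _).
  move=> B /imsetP [x _ ->]; apply/setP => y; apply/idP/bigcupP.
    move=> hy; exists [set inl (pidx y); inr (pidx y)].
      rewrite andbC; apply/andP; split.
        apply/subsetP => z; rewrite !inE; move: hy; rewrite inE => /eqP ->.
        by case/orP => /eqP ->.
      by rewrite /pone (imset_f (fun i : 'I_n => [set inl i; inr i])).
    by case: y {hy} => j; rewrite !inE eqxx ?orbT.
  by case=> A /andP [_ /subsetP]; apply.
move=> B /imsetP [x _ ->] i j k /andP [hij hjk]; rewrite !inE /= => /eqP E1 /eqP E2.
have h1 := lab_le f hij; have h2 := lab_le f hjk.
apply/eqP; lia.
Qed.

End S.

Section G.
Variable n : nat.

Definition bits (J : part n) (k : nat) : bool :=
  [exists a : 'I_n, exists b : 'I_n,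
     (nat_of_ord a == k) && (nat_of_ord b == k.+1) && (inl b \in pblock J (inl a))].

Lemma boxed_tiP (J : part n) : boxed J -> trivIset J.
Proof. by case=> /and3P []. Qed.

Lemma boxed_mem (J : part n) x : boxed J -> x \in pblock J x.
Proof. by case=> hJ _ _; rewrite mem_pblock setpart_cover. Qed.

Lemma boxed_pbin (J : part n) x : boxed J -> pblock J x \in J.
Proof. by case=> hJ _ _; rewrite pblock_mem // setpart_cover. Qed.

Lemma boxed_pblock (J : part n) (a b : 'I_n) : boxed J ->
  (inl b \in pblock J (inl a)) = (lab (bits J) a == lab (bits J) b).
Proof.
move=> hJ; have ti := boxed_tiP hJ.
have sym : forall x y : pt n, (y \in pblock J x) = (x \in pblock J y).
  have [hp _ _] := hJ; move=> x y; exact: (eqv_sym (eqv_pblock hp)).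
wlog hab : a b / a <= b.
  move=> W; case: (leqP a b) => h; first exact: W.
  by rewrite sym eq_sym; apply: W; exact: ltnW.
apply/idP/eqP.
  move=> hb; apply/(lab_eqP _ hab) => k /andP [h1 h2].
  have hk : k < n by have := ltn_ord b; lia.
  have hk1 : k.+1 < n by have := ltn_ord b; lia.
  apply/existsP; exists (Ordinal hk); apply/existsP; exists (Ordinal hk1); rewrite !eqxx /=.
  have [_ _ hI] := hJ.
  have ha : inl (Ordinal hk) \in pblock J (inl a).
    apply: (hI _ (boxed_pbin (inl a) hJ) a _ b) => //; [by rewrite /= h1; lia | exact: boxed_mem].
  have ha1 : inl (Ordinal hk1) \in pblock J (inl a).
    apply: (hI _ (boxed_pbin (inl a) hJ) a _ b) => //; [by rewrite /=; lia | exact: boxed_mem].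
  by rewrite (same_pblock ti ha).
move/(lab_eqP _ hab) => H.
suff : forall d (c : 'I_n), nat_of_ord c = nat_of_ord a + d -> c <= b -> inl c \in pblock J (inl a).
  by move=> W; apply: (W (b - a) b) => //; lia.
elim=> [|d IH] c hc hcb.
  have -> : c = a by apply: ord_inj; rewrite hc addn0.
  exact: boxed_mem.
have hd : nat_of_ord a + d < n by have := ltn_ord c; lia.
have := IH (Ordinal hd) erefl; rewrite /= => /(_ _) h.
have {h} h : inl (Ordinal hd) \in pblock J (inl a) by apply: h; lia.
have := H (a + d); rewrite (_ : a <= a + d < b); last by lia.
move=> /(_ isT) /existsP [a' /existsP [b' /andP [/andP [/eqP ha' /eqP hb'] hin]]].
have -> : c = b' by apply: ord_inj; lia.
have ea : a' = Ordinal hd by apply: ord_inj; rewrite ha'.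
by rewrite -(same_pblock ti h) -ea.
Qed.

Lemma boxed_pidx (J : part n) x : boxed J -> pblock J x = pblock J (inl (pidx x)).
Proof.
move=> hJ; case: x => [//|i].
have [_ hf _] := hJ.
have := hf _ (boxed_pbin (inr i) hJ) => /setP /(_ (inr i)).
rewrite boxed_mem // => /esym /bigcupP [A /andP [/imsetP [j _ ->] /subsetP hs]].
rewrite !inE /= => hh; have ej : i = j by apply/eqP. subst j.
have h : inl i \in pblock J (inr i) by apply: hs; rewrite !inE eqxx.
by rewrite (same_pblock (boxed_tiP hJ) h).
Qed.

Lemma boxed_Jbits (J : part n) : boxed J -> J = Jb n (bits J).
Proof.
move=> hJ; have [hp _ _] := hJ.
rewrite {1}(part_cls hp) /Jb /ck; apply: cls_ext => x y.
have ti := boxed_tiP hJ.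
rewrite -boxed_pblock // -(eq_pblock (inl (pidx y)) ti (setpart_cover (inl (pidx x)) hp)).
rewrite -(eq_pblock y ti (setpart_cover x hp)).
by rewrite -(boxed_pidx y hJ) -(boxed_pidx x hJ).
Qed.

Lemma bits_Jb f k : k.+1 < n -> bits (Jb n f) k = f k.
Proof.
move=> hk.
have ek : forall a : 'I_n, pblock (Jb n f) (inl a) = [set y | lab f a == lab f (pidx y)].
  by move=> a; rewrite /Jb /ck pblock_cls //; apply: eqv_key.
have hk0 : k < n by lia.
apply/existsP/idP.
  move=> [a /existsP [b /andP [/andP [/eqP ha /eqP hb] hin]]].
  move: hin; rewrite ek inE /= ha hb /=; case: (f k) => //=; lia.
move=> hf; exists (Ordinal hk0); apply/existsP; exists (Ordinal hk).
by rewrite !eqxx ek inE /= hf addn0.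
Qed.

Lemma lab_delta m j : lab (fun k => k == m) j = j - (m < j).
Proof.
elim: j => //= j ->; lia.
Qed.

Lemma bgen_Jb i : 0 < i < n -> bgen n i = Jb n (fun k => k == i.-1).
Proof.
move=> hi; set m := i.-1; have him : i = m.+1 by rewrite /m; lia.
have K : forall a b : nat, (a - (m < a) == b - (m < b)) =
  (a == b) || ((a == m) || (a == m.+1)) && ((b == m) || (b == m.+1)).
  move=> a b; case: (ltnP m a); case: (ltnP m b) => /= h1 h2; lia.
have cl : forall x : pt n, [set y | lab (fun k => k == m) (pidx x) == lab (fun k => k == m) (pidx y)] =
   if (nat_of_ord (pidx x) == m) || (nat_of_ord (pidx x) == i) then
     [set x : pt n | (nat_of_ord (pidx x) == i.-1) || (nat_of_ord (pidx x) == i)]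
   else [set inl (pidx x); inr (pidx x)].
  move=> x; apply/setP => y; rewrite !inE !lab_delta K.
  case: y => j; case: x => k; case: ifP => hx; rewrite !inE /= ?eqsimp -?val_eqE /= in hx *; lia.
apply/setP => B; rewrite in_setU /Jb /ck /cls.
apply/orP/imsetP.
  case=> [/imsetP [j hj ->]|].
    exists (inl j) => //; rewrite cl /=.
    by move: hj; rewrite inE -/m => /andP [/negbTE -> /negbTE ->].
  rewrite inE => /eqP ->.
  have hm : m < n by lia.
  by exists (inl (Ordinal hm)) => //; rewrite cl /= eqxx.
move=> [x _ ->]; rewrite cl; case: ifP => hx; first by right; rewrite inE.
left; apply/imsetP; exists (pidx x) => //.
by rewrite inE -/m; move: hx => /norP [-> ->].
Qed.

End G.

Fixpoint comp_aux (a : nat) (b : seq bool) : seq nat :=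
  match b with
  | [::] => [:: a.+1]
  | x :: b' => if x then comp_aux a.+1 b' else a.+1 :: comp_aux 0 b'
  end.

Definition bump_head a (s : seq nat) := if s is h :: t then (a + h) :: t else s.

Lemma comp_bump b a : comp_aux a b = bump_head a (comp_aux 0 b).
Proof.
elim: b a => [|x b IH] a /=; first by rewrite /bump_head addn1.
case: x; last by rewrite /bump_head addn1.
rewrite IH [comp_aux 1 b]IH; case: (comp_aux 0 b) => //= h t.
by rewrite addnA addn1.
Qed.

Lemma comp_ne b a : exists h t, comp_aux a b = h :: t.
Proof.
rewrite comp_bump; elim: b => [|[] b IH] /=; first by eexists; eexists.
  rewrite comp_bump; case: (comp_aux 0 b) IH => [[h [t]] //|h t _] /=; by eexists; eexists.
by eexists; eexists.
Qed.

Lemma comp_pos b a : all (fun k => 0 < k) (comp_aux a b) /\ sumn (comp_aux a b) = a + size b + 1.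
Proof.
elim: b a => [|[] b IH] a /=; first by split => //; lia.
  by have [h1 h2] := IH a.+1; split => //; rewrite h2; lia.
by have [h1 h2] := IH 0; split => //; rewrite h2; lia.
Qed.

Lemma coarser0 : coarser [::] [::].
Proof. by exists [::]. Qed.

Lemma coarser1 m mu tau : coarser mu tau -> coarser (m :: mu) (m :: tau).
Proof.
case=> r [hr hs ->]; exists (1 :: r); split => //=; first by rewrite hs.
by rewrite take0 drop0 addn0.
Qed.

Lemma coarser2 m1 m2 mu t tau : coarser (m2 :: mu) (t :: tau) ->
  coarser (m1 :: m2 :: mu) ((m1 + t) :: tau).
Proof.
case=> [[|k r]] [hr hs] //= [ht htau].
exists (k.+1 :: r); split.
- by move: hr => /= /andP [_ ->].
- by move: hs => /=; lia.
- by rewrite /= ht htau.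
Qed.

Lemma coarser_nil tau : coarser [::] tau -> tau = [::].
Proof. by case=> [[|k r]] [] //= /andP [hk _] /eqP; rewrite addn_eq0; case/andP => /eqP; lia. Qed.

Lemma coarser_inv m mu tau : coarser (m :: mu) tau ->
  (exists tau', tau = m :: tau' /\ coarser mu tau') \/
  (exists t tau', tau = (m + t) :: tau' /\ coarser mu (t :: tau')).
Proof.
case=> [[|k r]] [] //= /andP [hk hr] hs ->.
case: k hk hs => [//|[|k]] _ hs /=.
  by left; rewrite take0 drop0 addn0; eexists; split; [reflexivity | exists r; split => //; lia].
right; eexists; eexists; split; first reflexivity.
by exists (k.+1 :: r); split => //=; lia.
Qed.

Lemma comp_mono b : forall a c, all2 implb b c -> coarser (comp_aux a b) (comp_aux a c).
Proof.
elim: b => [|x b IH] a [|y c] //=.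
  by move=> _; apply: coarser1; exact: coarser0.
case/andP => hxy hbc; case: x hxy; case: y => //= _.
- exact: IH.
- have := IH 0 _ hbc; rewrite (comp_bump c a.+1).
  have [h [t E]] := comp_ne b 0; have [h' [t' E']] := comp_ne c 0.
  rewrite E E' /= => H; exact: coarser2.
- by apply: coarser1; apply: IH.
Qed.

Lemma comp_coarse b : forall a tau, coarser (comp_aux a b) tau ->
  exists c, [/\ size c = size b, all2 implb b c & tau = comp_aux a c].
Proof.
elim: b => [|x b IH] a tau /=.
  case/coarser_inv => [[tau' [-> /coarser_nil ->]]|[t [tau' [_ /coarser_nil //]]]].
  by exists [::].
case: x.
  case/IH => c [h1 h2 ->]; by exists (true :: c); rewrite /= h1 h2.
case/coarser_inv => [[tau' [-> /IH [c [h1 h2 ->]]]]|[t [tau' [-> /IH [c [h1 h2 E]]]]]].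
  by exists (false :: c); rewrite /= h1 h2.
exists (true :: c); rewrite /= h1 h2; split => //.
by rewrite comp_bump -E.
Qed.

Lemma comp_inj b : forall a c, size b = size c -> comp_aux a b = comp_aux a c -> b = c.
Proof.
elim: b => [|x b IH] a [|y c] //= [hs].
case: x; case: y => E.
- by rewrite (IH _ _ hs E).
- move: E; rewrite (comp_bump b a.+1); have [h [t Et]] := comp_ne b 0.
  have := (comp_pos b 0).1; rewrite Et /= => /andP [hh _] [].
  lia.
- move: E; rewrite (comp_bump c a.+1); have [h [t Et]] := comp_ne c 0.
  have := (comp_pos c 0).1; rewrite Et /= => /andP [hh _] [].
  lia.
- by case: E => /(IH _ _ hs) ->.
Qed.

Lemma comp_nseq k a rest : comp_aux a (nseq k true ++ rest) = comp_aux (a + k) rest.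
Proof. by elim: k a => [|k IH] a /=; rewrite ?addn0 // IH addnS. Qed.

Lemma comp_surj mu : all (fun k => 0 < k) mu -> mu <> [::] ->
  exists b, comp_aux 0 b = mu /\ size b = (sumn mu).-1.
Proof.
elim: mu => [//|m mu IH] /= /andP [hm hmu] _.
case: mu IH hmu => [|m2 mu] IH hmu.
  exists (nseq m.-1 true); split; last by rewrite size_nseq /=; lia.
  by rewrite -[nseq _ _]cats0 comp_nseq /=; congr (_ :: _); lia.
have [b [Eb Sb]] := IH hmu (fun h => match h with end).
exists (nseq m.-1 true ++ false :: b); rewrite comp_nseq /= Eb; split.
  by congr (_ :: _); lia.
rewrite size_cat size_nseq /= Sb; move: hmu => /= /andP [h2 _]; lia.
Qed.

Definition bor (b c : seq bool) := [seq p.1 || p.2 | p <- zip b c].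

Lemma bor_l b c : size b = size c -> all2 implb b (bor b c).
Proof. by elim: b c => [|x b IH] [|y c] //= [/IH ->]; case: x. Qed.

Lemma bor_r b c : size b = size c -> all2 implb c (bor b c).
Proof. by elim: b c => [|x b IH] [|y c] //= [/IH ->]; case: x; case: y. Qed.

Lemma bor_lub b c d : all2 implb b d -> all2 implb c d -> all2 implb (bor b c) d.
Proof.
elim: b c d => [|x b IH] [|y c] [|z d] //=.
case/andP => h1 h2 /andP [h3 h4]; have := IH _ _ h2 h4; rewrite /bor => ->; rewrite andbT.
by case: x h1; case: y h3.
Qed.

Lemma size_bor b c : size b = size c -> size (bor b c) = size b.
Proof. by move=> h; rewrite size_map size_zip h minnn. Qed.

Lemma comp_join b c : size b = size c ->
  is_join (comp_aux 0 b) (comp_aux 0 c) (comp_aux 0 (bor b c)).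
Proof.
move=> hs; split; [exact: comp_mono (bor_l hs) | exact: comp_mono (bor_r hs) |].
move=> tau /comp_coarse [d1 [s1 i1 E1]] /comp_coarse [d2 [s2 i2 E2]].
have E : d1 = d2 by apply: (comp_inj (a := 0)); [rewrite s1 s2 | rewrite -E1 -E2].
subst d2; rewrite E1; apply: comp_mono; exact: bor_lub.
Qed.

Section M.
Variable n : nat.

Lemma Jb_ext f g : (forall k, k < n.-1 -> f k = g k) -> Jb n f = Jb n g.
Proof.
move=> H; rewrite /Jb /ck; apply: cls_ext => x y.
have hx : pidx x <= n.-1 by have := ltn_ord (pidx x); lia.
have hy : pidx y <= n.-1 by have := ltn_ord (pidx y); lia.
by rewrite (lab_ext H hx) (lab_ext H hy).
Qed.

Lemma mkseq_eq_in (f g : nat -> bool) m : (forall k, k < m -> f k = g k) -> mkseq f m = mkseq g m.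
Proof.
move=> H; apply: (@eq_from_nth _ false); rewrite !size_mkseq // => i hi.
by rewrite !nth_mkseq // H.
Qed.

Lemma mkseq_eq_out (f g : nat -> bool) m : mkseq f m = mkseq g m -> forall k, k < m -> f k = g k.
Proof.
move=> E k hk; have := congr1 (fun s => nth false s k) E.
by rewrite /= !nth_mkseq.
Qed.

Lemma mkseq_or (f g : nat -> bool) m : mkseq (fun k => f k || g k) m = bor (mkseq f m) (mkseq g m).
Proof.
apply: (@eq_from_nth _ false); first by rewrite size_bor !size_mkseq.
rewrite size_mkseq => i hi.
rewrite nth_mkseq // /bor (nth_map (false, false)); last by rewrite size_zip !size_mkseq minnn.
by rewrite nth_zip ?size_mkseq //= !nth_mkseq.
Qed.

Lemma mk_bits_Jb f : mkseq (bits (Jb n f)) n.-1 = mkseq f n.-1.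
Proof. apply: mkseq_eq_in => k hk; apply: bits_Jb; lia. Qed.

Lemma pone_pone : pmul (pone n) (pone n) = pone n.
Proof. by rewrite pone_pf pmul_pf. Qed.

Lemma fold_egen s : all (fun i => 0 < i < n) s ->
  foldr (@brmul n) (brone n) [seq egen n i | i <- s] = (pone n, Jb n (fun k => k.+1 \in s)).
Proof.
elim: s => [|i s IH] /=.
  by move=> _; rewrite /brone pone_Jb; congr pair; apply: Jb_ext.
case/andP => hi hs; rewrite IH // /brmul /egen /= pone_pone bgen_Jb // pmul_Jb.
congr pair; apply: Jb_ext => k _; rewrite in_cons; congr orb; lia.
Qed.

Lemma join_Jb f g : is_join (comp_aux 0 (mkseq (bits (Jb n f)) n.-1))
  (comp_aux 0 (mkseq (bits (Jb n g)) n.-1))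
  (comp_aux 0 (mkseq (bits (Jb n (fun k => f k || g k))) n.-1)).
Proof.
rewrite (mk_bits_Jb f) (mk_bits_Jb g) (mk_bits_Jb (fun k => f k || g k)) mkseq_or.
by apply: comp_join; rewrite !size_mkseq.
Qed.

End M.

Definition phi n (x : part n * part n) : seq nat := comp_aux 0 (mkseq (bits x.2) n.-1).

Theorem proposition5p16 (n : nat) (hn : 3 <= n) :
  (* the center of BR(S_n) is {(1,J) | J boxed} *)
  (forall x : part n * part n,
      (BR x /\ forall y, BR y -> brmul x y = brmul y x) <->
      (exists J, boxed J /\ x = (pone n, J)))
  /\
  (* this set is the submonoid generated by e_1, ..., e_(n-1) *)
  (forall x : part n * part n,
      (exists J, boxed J /\ x = (pone n, J)) <->
      (exists s : seq nat, all (fun i => 0 < i < n) s /\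
                           x = foldr (@brmul n) (brone n) [seq egen n i | i <- s]))
  /\
  (* and it is isomorphic to the monoid C_n of compositions of n (with join) *)
  (exists phi : part n * part n -> seq nat,
      [/\ forall J, boxed J -> composition n (phi (pone n, J)),
          forall J J', boxed J -> boxed J' ->
            phi (pone n, J) = phi (pone n, J') -> J = J',
          forall mu, composition n mu -> exists J, boxed J /\ phi (pone n, J) = mu
        & forall J J', boxed J -> boxed J' ->
            is_join (phi (pone n, J)) (phi (pone n, J'))
                    (phi (brmul (pone n, J) (pone n, J')))]).
Proof.
split.
  move=> [x1 x2]; split.
    case=> [[h1 h2 h3] hc]; exists x2; split => //=.
    have [g Eg] := insn_pf h1; simpl in Eg.
    have comm : forall t : {perm 'I_n}, forall i, t (g i) = g (t i).
      move=> t.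
      have : brmul (x1, x2) (pf (fun i => t i), Jb n (fun _ => true)) =
             brmul (pf (fun i => t i), Jb n (fun _ => true)) (x1, x2).
        apply: hc; split; [exact: insn_perm | exact: boxed_Jb | apply: pfiner_full].
        exact: cls_part (eqv_key _).
      rewrite /brmul /= Eg !pmul_pf => [[E _]].
      exact: pf_inj E.
    have gid : forall i, g i = i.
      move=> i; case: (eqVneq (g i) i) => // hne; exfalso.
      set k0 := if (0 != nat_of_ord i) && (0 != nat_of_ord (g i)) then 0
                else if (1 != nat_of_ord i) && (1 != nat_of_ord (g i)) then 1 else 2.
      have hk : k0 < n by rewrite /k0; case: ifP => _; [|case: ifP => _]; lia.
      have hne' : nat_of_ord (g i) != nat_of_ord i by [].
      have hki : k0 != nat_of_ord i by rewrite /k0; case: ifP; [|case: ifP]; lia.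
      have hkg : k0 != nat_of_ord (g i) by rewrite /k0; case: ifP; [|case: ifP]; lia.
      have := comm (tperm (g i) (Ordinal hk)) i.
      rewrite tpermL tpermD //; first by move=> E; move: hkg; rewrite -E eqxx.
    by rewrite Eg pone_pf; congr pair; apply: pf_ext.
  case=> J [hJ [-> ->]]; split.
    split => //=; last by case: hJ.
    have e1 : pf (fun i => (1%g : {perm 'I_n}) i) = pf (fun i : 'I_n => i).
      by apply: pf_ext => i; rewrite perm1.
    rewrite pone_pf -e1; exact: insn_perm.
  move=> [y1 y2] [hy1 hy2 _]; have [h Eh] := insn_pf hy1; simpl in Eh, hy2.
  rewrite /brmul /= Eh pone_pf !pmul_pf (boxed_Jbits hJ) (boxed_Jbits hy2) !pmul_Jb.
  congr pair.
  by apply: Jb_ext => k _; rewrite orbC.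
split.
  move=> x; split.
    case=> J [hJ ->].
    exists [seq k.+1 | k <- iota 0 n.-1 & bits J k]; split.
      apply/allP => i /mapP [k]; rewrite mem_filter mem_iota => /andP [_ hk] ->; lia.
    rewrite fold_egen; last first.
      apply/allP => i /mapP [k]; rewrite mem_filter mem_iota => /andP [_ hk] ->; lia.
    congr pair; rewrite {1}(boxed_Jbits hJ); apply: Jb_ext => k hk.
    rewrite (mem_map succn_inj) mem_filter mem_iota /=.
    by rewrite add0n hk andbT.
  case=> s [hs ->]; rewrite fold_egen //; exists (Jb n (fun k => k.+1 \in s)); split => //; exact: boxed_Jb.
exists (@phi n); split.
- move=> J _; rewrite /phi /=; have [h1 h2] := comp_pos (mkseq (bits J) n.-1) 0.
  by split => //; rewrite h2 size_mkseq; lia.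
- move=> J J' hJ hJ'; rewrite /phi /= => E.
  have := comp_inj (a := 0) _ E; rewrite !size_mkseq => /(_ erefl) /mkseq_eq_out H.
  by rewrite (boxed_Jbits hJ) (boxed_Jbits hJ'); apply: Jb_ext.
- move=> mu [hpos hsum].
  have [b [Eb Sb]] := comp_surj hpos (fun h => ltac:(subst mu; simpl in hsum; lia)).
  exists (Jb n (nth false b)); split; first exact: boxed_Jb.
  by rewrite /phi /= mk_bits_Jb -hsum -Sb mkseq_nth.
- move=> J J' hJ hJ'; rewrite /phi /brmul /=.
  rewrite (boxed_Jbits hJ) (boxed_Jbits hJ') pmul_Jb; exact: join_Jb.
Qed.
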